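(* Let $r,K,\mu$ satisfy Assumption 1. Let $\mathcal D=(0,1)\times(0,K)$, $Z_w=\{f_w=0\}\cap\mathcal D$, $Z_w^-=\{f_w<0\}\cap\mathcal D$, $Z_m=\{f_m=0\}\cap\mathcal D$, $Z_m^-=\{f_m<0\}\cap\mathcal D$, $\mathcal D_l=\{(w,m)\in\mathcal D: w\le w^*, m\ge m^*\}$ and $\mathcal D_r=\{(w,m)\in\mathcal D: w\ge w^*, m\le m^*\}$. Then $Z_m\cup Z_w\subset\mathcal D_l\cup\mathcal D_r$, $Z_w^-\cap\mathcal D_l\subset Z_m^-$, and $Z_m^-\cap\mathcal D_r\subset Z_w^-$.
   Context: Assumption 1: $r\in(1,\infty)$, $\mu\in\left(0,\min\left(\frac r2,1-\frac1r,1-K,K\right)\right)$, $K\in\left(0,\min\left(1,\frac{r}{r-1}\left(1-\frac{\mu}{1-\mu}\right)\right)\right)$. $f_w(w,m):=w(1-(w+m))+\mu(m-w)$, $f_m(w,m):=rm\left(1-\frac{w+m}{K}\right)+\mu(w-m)$; $(w^*,m^* )$ is the unique solution in $(0,1)\times(0,K)$ of $f_w=f_m=0$. *)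

(* Defs.v *)
From Stdlib Require Import Reals.
Open Scope R_scope.

Definition f_w (mu w m : R) : R := w * (1 - (w + m)) + mu * (m - w).
Definition f_m (r K mu w m : R) : R := r * m * (1 - (w + m) / K) + mu * (w - m).

Definition assumption1 (r K mu : R) : Prop :=
  1 < r /\
  0 < mu /\ mu < r / 2 /\ mu < 1 - 1 / r /\ mu < 1 - K /\ mu < K /\
  0 < K /\ K < 1 /\ K < r / (r - 1) * (1 - mu / (1 - mu)).

Definition inD (K w m : R) : Prop := 0 < w < 1 /\ 0 < m < K.

Definition is_unique_eq (r K mu ws ms : R) : Prop :=
  inD K ws ms /\ f_w mu ws ms = 0 /\ f_m r K mu ws ms = 0 /\
  (forall w m, inD K w m -> f_w mu w m = 0 -> f_m r K mu w m = 0 ->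
     w = ws /\ m = ms).

Definition inDl (K ws ms w m : R) : Prop := inD K w m /\ w <= ws /\ ms <= m.
Definition inDr (K ws ms w m : R) : Prop := inD K w m /\ ws <= w /\ m <= ms.

(* Main.v *)
Require Import Defs.
From Stdlib Require Import Reals Lra Psatz.
Open Scope R_scope.

Lemma no_zero (Q : R -> R) a b : continuity Q -> a < b -> 0 < Q b ->
  (forall z, a < z < b -> Q z = 0 -> False) -> forall x, a < x < b -> 0 < Q x.
Proof.
  intros HC Hab Hb Hno x Hx.
  destruct (Rlt_le_dec 0 (Q x)) as [H|H]; [exact H|].
  exfalso. destruct (Rle_lt_or_eq_dec _ _ H) as [H1|H1].
  - destruct (IVT Q x b HC (proj2 Hx) H1 Hb) as [z [Hz Hz0]].
    apply (Hno z); [|exact Hz0].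
    split; [lra|]. destruct (Rle_lt_or_eq_dec _ _ (proj2 Hz)) as [E|E]; [exact E|].
    subst z. lra.
  - apply (Hno x Hx H1).
Qed.

Lemma fw_form mu w m : f_w mu w m = w*(1-mu-w) - m*(w-mu).
Proof. unfold f_w; ring. Qed.

Lemma fm_form r K mu w m : 0 < K ->
  K * f_m r K mu w m = m*(r*K - r*m - mu*K) - w*(r*m - mu*K).
Proof. intros. unfold f_m; field; lra. Qed.

Lemma contQ r K mu : continuity (fun x => r*(x*(1-mu-x))*(K*(x-mu) - x*(x-mu) - x*(1-mu-x))
                  + mu*K*(x*(x-mu)^2 - x*(1-mu-x)*(x-mu))).
Proof. reg. Qed.

Lemma contP r K mu : continuity (fun y => -(y*(r*K-r*y-mu*K))^2 + (y*(r*K-r*y-mu*K))*(r*y-mu*K)*(1-y-mu)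
                  + mu*y*(r*y-mu*K)^2).
Proof. reg. Qed.

Theorem mainTheorem19 (r K mu ws ms : R) :
  assumption1 r K mu ->
  is_unique_eq r K mu ws ms ->
  (forall w m, inD K w m -> (f_m r K mu w m = 0 \/ f_w mu w m = 0) ->
     inDl K ws ms w m \/ inDr K ws ms w m) /\
  (forall w m, inD K w m -> f_w mu w m < 0 -> inDl K ws ms w m ->
     f_m r K mu w m < 0) /\
  (forall w m, inD K w m -> f_m r K mu w m < 0 -> inDr K ws ms w m ->
     f_w mu w m < 0).
Proof.
  intros [Hr [Hmu0 [Hmur [_ [HmuK1 [HmuK [HK0 [HK1 _]]]]]]]]
         [[[Hws0 Hws1] [Hms0 Hms1]] [Hfw [Hfm Huniq]]].
  assert (Hmu2 : mu < 1/2) by lra.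
  assert (Zw_mu : forall w m, 0 < w -> 0 < m -> f_w mu w m = 0 -> mu < w).
  { intros w m Hw Hm E. rewrite fw_form in E.
    destruct (Rlt_le_dec mu w) as [?|Hle]; [assumption|].
    exfalso. assert (0 < w*(1-mu-w)) by (apply Rmult_lt_0_compat; lra).
    assert (0 <= m*(mu - w)) by (apply Rmult_le_pos; lra). nra. }
  assert (Zm_s : forall w m, 0 < w -> 0 < m < K -> f_m r K mu w m = 0 -> mu*K < r*m).
  { intros w m Hw Hm E. pose proof (fm_form r K mu w m HK0) as F. rewrite E in F.
    destruct (Rlt_le_dec (mu*K) (r*m)) as [?|Hle]; [assumption|].
    exfalso. assert (0 < r*K - r*m - mu*K) by nra.
    assert (0 < m*(r*K - r*m - mu*K)) by (apply Rmult_lt_0_compat; lra).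
    assert (0 <= w*(mu*K - r*m)) by (apply Rmult_le_pos; lra). nra. }
  pose proof (Zw_mu ws ms Hws0 Hms0 Hfw) as Hwsmu.
  pose proof (Zm_s ws ms Hws0 (conj Hms0 Hms1) Hfm) as Hmss.
  set (ts := ws - mu). set (ss := r*ms - mu*K).
  assert (Hts : 0 < ts) by (unfold ts; lra).
  assert (Hss : 0 < ss) by (unfold ss; lra).
  assert (Ews : ms * ts = ws*(1-mu-ws)) by (rewrite fw_form in Hfw; unfold ts; lra).
  assert (Ems : ws * ss = ms*(r*K - r*ms - mu*K))
    by (pose proof (fm_form r K mu ws ms HK0) as F; rewrite Hfm in F; unfold ss; lra).
  assert (IdW : forall w m, m*(w-mu) = w*(1-mu-w) ->
     (m - ms)*(w-mu)*ts = -((w-mu)*ts + mu*(1-2*mu))*(w-ws)).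
  { intros w m E.
    replace ((m - ms)*(w-mu)*ts) with ((m*(w-mu))*ts - (ms*ts)*(w-mu)) by ring.
    rewrite E, Ews. unfold ts; ring. }
  assert (IdM : forall w m, w*(r*m-mu*K) = m*(r*K - r*m - mu*K) ->
     (w - ws)*(r*m-mu*K)*ss = -((r*m-mu*K)*ss + mu*K*K*(r-2*mu))*(m-ms)).
  { intros w m E.
    replace ((w - ws)*(r*m-mu*K)*ss) with ((w*(r*m-mu*K))*ss - (ws*ss)*(r*m-mu*K)) by ring.
    rewrite E, Ems. unfold ss; ring. }
  assert (Hc1 : 0 < mu*(1-2*mu)) by nra.
  assert (Hc2 : 0 < mu*K*K*(r-2*mu)).
  { repeat apply Rmult_lt_0_compat; lra. }
  split; [|split].
  -
    intros w m [[Hw0 Hw1] [Hm0 Hm1]] [E|E].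
    + pose proof (Zm_s w m Hw0 (conj Hm0 Hm1) E) as Hs.
      pose proof (fm_form r K mu w m HK0) as F. rewrite E in F.
      assert (E' : w*(r*m-mu*K) = m*(r*K - r*m - mu*K)) by lra.
      pose proof (IdM w m E') as I.
      set (s := r*m - mu*K) in *.
      assert (Hs' : 0 < s) by (unfold s; lra).
      assert (Hp : 0 < s*ss) by (apply Rmult_lt_0_compat; lra).
      destruct (Rle_lt_dec ms m) as [Hle|Hlt].
      * left. split; [repeat split; lra|]. split; [|lra].
        assert (0 <= (s*ss + mu*K*K*(r-2*mu))*(m-ms)) by (apply Rmult_le_pos; lra).
        assert ((w-ws)*(s*ss) <= 0) by (rewrite <- Rmult_assoc; lra).
        nra.
      * right. split; [repeat split; lra|]. split; [|lra].
        assert ((s*ss + mu*K*K*(r-2*mu))*(m-ms) < 0)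
          by (apply Rmult_pos_neg; lra).
        assert ((w-ws)*(s*ss) > 0) by (rewrite <- Rmult_assoc; lra).
        nra.
    + pose proof (Zw_mu w m Hw0 Hm0 E) as Ht.
      rewrite fw_form in E.
      assert (E' : m*(w-mu) = w*(1-mu-w)) by lra.
      pose proof (IdW w m E') as I.
      set (t := w - mu) in *.
      assert (Ht' : 0 < t) by (unfold t; lra).
      assert (Hp : 0 < t*ts) by (apply Rmult_lt_0_compat; lra).
      destruct (Rle_lt_dec w ws) as [Hle|Hlt].
      * left. split; [repeat split; lra|]. split; [lra|].
        assert (-(t*ts + mu*(1-2*mu))*(w-ws) >= 0) by nra.
        assert ((m-ms)*(t*ts) >= 0) by (rewrite <- Rmult_assoc; lra).
        nra.
      * right. split; [repeat split; lra|]. split; [lra|].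
        assert (-(t*ts + mu*(1-2*mu))*(w-ws) < 0) by nra.
        assert ((m-ms)*(t*ts) < 0) by (rewrite <- Rmult_assoc; lra).
        nra.
  -
    set (P := fun y => -(y*(r*K-r*y-mu*K))^2 + (y*(r*K-r*y-mu*K))*(r*y-mu*K)*(1-y-mu)
                  + mu*y*(r*y-mu*K)^2).
    assert (RelP : forall y, r*y - mu*K <> 0 ->
      (r*y-mu*K)^2 * f_w mu (y*(r*K-r*y-mu*K)/(r*y-mu*K)) y = P y).
    { intros y Hy. rewrite fw_form. unfold P. field. exact Hy. }
    set (m1 := (r*K - mu*K)/r).
    assert (Em1 : r*m1 = r*K - mu*K) by (unfold m1; field; lra).
    assert (Hmsm1 : ms < m1).
    { assert (0 < ws*ss) by (apply Rmult_lt_0_compat; lra).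
      assert (0 < r*K - r*ms - mu*K).
      { destruct (Rlt_le_dec 0 (r*K - r*ms - mu*K)) as [?|Hn]; [assumption|].
        assert (ms*(r*K - r*ms - mu*K) <= 0) by nra. lra. }
      nra. }
    assert (Hm1K : m1 < K) by nra.
    assert (Ppos : forall y, ms < y < m1 -> 0 < P y).
    { apply (no_zero P ms m1).
      - apply contP.
      - lra.
      - unfold P. replace (r*K - r*m1 - mu*K) with 0 by lra.
        assert (0 < r*m1 - mu*K) by nra.
        assert (0 < m1) by lra.
        assert (0 < mu*m1*(r*m1-mu*K)^2).
        { apply Rmult_lt_0_compat; [apply Rmult_lt_0_compat; lra|]. nra. }
        nra.
      - intros z Hz Pz.
        assert (Hs : 0 < r*z - mu*K) by nra.
        assert (HN : 0 < z*(r*K-r*z-mu*K)) by (apply Rmult_lt_0_compat; nra).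
        set (h := z*(r*K-r*z-mu*K)/(r*z-mu*K)).
        assert (Eh : h*(r*z-mu*K) = z*(r*K-r*z-mu*K)) by (unfold h; field; lra).
        assert (Hh0 : 0 < h).
        { unfold h. apply Rdiv_lt_0_compat; lra. }
        pose proof (IdM h z Eh) as I.
        assert (Hp : 0 < (r*z-mu*K)*ss) by (apply Rmult_lt_0_compat; lra).
        assert (-((r*z-mu*K)*ss + mu*K*K*(r-2*mu))*(z-ms) < 0) by nra.
        assert (Hhw : h < ws) by nra.
        assert (Fm : f_m r K mu h z = 0).
        { pose proof (fm_form r K mu h z HK0) as F.
          assert (K * f_m r K mu h z = 0) by lra.
          destruct (Rmult_integral _ _ H0); lra. }
        assert (Fw : f_w mu h z = 0).
        { pose proof (RelP z ltac:(lra)) as R. fold h in R. rewrite Pz in R.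
          assert (0 < (r*z-mu*K)^2) by nra.
          nra. }
        destruct (Huniq h z ltac:(unfold inD; lra) Fw Fm). lra. }
    intros w m [[Hw0 Hw1] [Hm0 Hm1]] Hfw' [_ [Hww Hmm]].
    destruct (Rlt_le_dec (f_m r K mu w m) 0) as [?|Hge]; [assumption|]. exfalso.
    pose proof (fm_form r K mu w m HK0) as F.
    assert (r*ms <= r*m) by (apply Rmult_le_compat_l; lra).
    assert (Hs : 0 < r*m - mu*K) by (unfold ss in Hss; lra).
    assert (0 <= K * f_m r K mu w m) by nra.
    assert (0 < w*(r*m-mu*K)) by (apply Rmult_lt_0_compat; lra).
    assert (HN : 0 < m*(r*K-r*m-mu*K)) by lra.
    assert (0 < r*K-r*m-mu*K).
    { destruct (Rlt_le_dec 0 (r*K-r*m-mu*K)) as [?|Hn]; [assumption|].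
      assert (m*(r*K - r*m - mu*K) <= 0) by nra. lra. }
    assert (Hmm1 : m < m1).
    { destruct (Rlt_le_dec m m1) as [?|Hn]; [assumption|].
      assert (r*m1 <= r*m) by (apply Rmult_le_compat_l; lra). lra. }
    assert (HP : 0 <= P m).
    { destruct (Rle_lt_or_eq_dec _ _ Hmm) as [Hq|Hq].
      - left; apply Ppos; lra.
      - subst m. rewrite <- RelP by lra.
        replace (ms * (r*K - r*ms - mu*K) / (r*ms - mu*K)) with ws by (fold ss; rewrite <- Ems; field; lra).
        rewrite Hfw. lra. }
    set (h := m*(r*K-r*m-mu*K)/(r*m-mu*K)).
    assert (Eh : h*(r*m-mu*K) = m*(r*K-r*m-mu*K)) by (unfold h; field; lra).
    assert (Hwh : w <= h) by nra.
    assert (Hh0 : 0 < h) by lra.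
    assert (Kh : 0 <= f_w mu h m).
    { pose proof (RelP m ltac:(lra)) as R. fold h in R.
      assert (0 < (r*m-mu*K)^2) by nra. nra. }
    assert (Conc : h * f_w mu w m = (h-w)*f_w mu 0 m + w*f_w mu h m + h*w*(h-w)).
    { rewrite !fw_form. ring. }
    assert (K0 : f_w mu 0 m = mu*m) by (rewrite fw_form; ring).
    rewrite K0 in Conc.
    assert (0 <= (h-w)*(mu*m)) by (apply Rmult_le_pos; [lra|]; apply Rmult_le_pos; lra).
    assert (0 <= w*f_w mu h m) by (apply Rmult_le_pos; lra).
    assert (0 <= h*w*(h-w)) by (apply Rmult_le_pos; [apply Rmult_le_pos|]; lra).
    assert (0 <= h * f_w mu w m) by lra.
    nra.
  -
    set (Q := fun x => r*(x*(1-mu-x))*(K*(x-mu) - x*(x-mu) - x*(1-mu-x))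
                  + mu*K*(x*(x-mu)^2 - x*(1-mu-x)*(x-mu))).
    assert (RelQ : forall x, x - mu <> 0 ->
      (x-mu)^2 * (K * f_m r K mu x (x*(1-mu-x)/(x-mu))) = Q x).
    { intros x Hx. rewrite fm_form by lra. unfold Q. field. exact Hx. }
    assert (Qpos : forall x, ws < x < 1 - mu -> 0 < Q x).
    { apply (no_zero Q ws (1-mu)).
      - apply contQ.
      - assert (0 < ms*ts) by (apply Rmult_lt_0_compat; lra). nra.
      - unfold Q. replace (1-mu-(1-mu)) with 0 by ring.
        assert (0 < mu*K*((1-mu)*(1-mu-mu)^2)).
        { apply Rmult_lt_0_compat; [nra|]. apply Rmult_lt_0_compat; [lra|]. nra. }
        nra.
      - intros z Hz Qz.
        assert (Ht : 0 < z - mu) by lra.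
        set (g := z*(1-mu-z)/(z-mu)).
        assert (Eg : g*(z-mu) = z*(1-mu-z)) by (unfold g; field; lra).
        assert (Hg0 : 0 < g).
        { unfold g. apply Rdiv_lt_0_compat; [|lra]. apply Rmult_lt_0_compat; lra. }
        pose proof (IdW z g Eg) as I.
        assert (Hp : 0 < (z-mu)*ts) by (apply Rmult_lt_0_compat; lra).
        assert (-((z-mu)*ts + mu*(1-2*mu))*(z-ws) < 0) by nra.
        assert (Hgm : g < ms) by nra.
        assert (Fw : f_w mu z g = 0) by (rewrite fw_form; lra).
        assert (Fm : f_m r K mu z g = 0).
        { pose proof (RelQ z ltac:(lra)) as R. fold g in R. rewrite Qz in R.
          assert (0 < (z-mu)^2) by nra.
          assert (K * f_m r K mu z g = 0) by nra.
          destruct (Rmult_integral _ _ H1); lra. }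
        destruct (Huniq z g ltac:(unfold inD; lra) Fw Fm). lra. }
    intros w m [[Hw0 Hw1] [Hm0 Hm1]] Hfm' [_ [Hww Hmm]].
    destruct (Rlt_le_dec (f_w mu w m) 0) as [?|Hge]; [assumption|]. exfalso.
    rewrite fw_form in Hge.
    assert (Ht : 0 < w - mu) by lra.
    assert (0 < m*(w-mu)) by (apply Rmult_lt_0_compat; lra).
    assert (Hw1m : w < 1 - mu) by nra.
    assert (HQ : 0 <= Q w).
    { destruct (Rle_lt_or_eq_dec _ _ Hww) as [Hq|Hq].
      - left; apply Qpos; lra.
      - subst w. rewrite <- RelQ by lra.
        replace (ws * (1 - mu - ws) / (ws - mu)) with ms by (fold ts; rewrite <- Ews; field; lra).
        rewrite Hfm. lra. }
    set (g := w*(1-mu-w)/(w-mu)).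
    assert (Eg : g*(w-mu) = w*(1-mu-w)) by (unfold g; field; lra).
    assert (Hg0 : 0 < g) by nra.
    assert (Hmg : m <= g) by nra.
    assert (Kg : 0 <= K * f_m r K mu w g).
    { pose proof (RelQ w ltac:(lra)) as R. fold g in R.
      assert (0 < (w-mu)^2) by nra. nra. }
    assert (Conc : g * (K * f_m r K mu w m) =
       (g-m)*(K*f_m r K mu w 0) + m*(K*f_m r K mu w g) + r*g*m*(g-m)).
    { rewrite !fm_form by lra. ring. }
    assert (K0 : K * f_m r K mu w 0 = mu*K*w) by (rewrite fm_form by lra; ring).
    rewrite K0 in Conc.
    assert (0 <= (g-m)*(mu*K*w)) by (apply Rmult_le_pos; [lra|]; repeat apply Rmult_le_pos; lra).
    assert (0 <= m*(K*f_m r K mu w g)) by (apply Rmult_le_pos; lra).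
    assert (0 <= r*g*m*(g-m)) by (apply Rmult_le_pos; [apply Rmult_le_pos; [apply Rmult_le_pos|]|]; lra).
    assert (0 <= g * (K * f_m r K mu w m)) by lra.
    assert (0 <= K * f_m r K mu w m) by nra.
    nra.
Qed.
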